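(* Every Bernstein set $B\subseteq\mathbb R^2$ is a $2$-I-covering.
   Context: A set $B\subseteq\mathbb R^2$ is a Bernstein set if for every uncountable Borel $Z\subseteq\mathbb R^2$ both $Z\cap B$ and $Z\setminus B$ are nonempty. A set $A\subseteq\mathbb R^2$ is a $2$-I-covering if for every $C\subseteq\mathbb R^2$ with $|C|=2$ there is an isometry $\phi$ of the Euclidean plane with $\phi[C]\subseteq A$. *)

(* Defs.v *)
(* The plane R^2 is modelled as R * R for R : realType,
   with its product (= Euclidean) topology. *)
From HB Require Import structures.
From mathcomp Require Import all_boot all_order all_algebra.
From mathcomp Require Import all_classical all_reals all_analysis.
Set Implicit Arguments. Unset Strict Implicit. Unset Printing Implicit Defensive.
Import numFieldNormedType.Exports.
Import Order.TTheory GRing.Theory Num.Theory.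
Local Open Scope classical_set_scope.
Local Open Scope ring_scope.

Definition sqdist (R : realType) (p q : R * R) : R :=
  (p.1 - q.1) ^+ 2 + (p.2 - q.2) ^+ 2.

Definition plane_isometry (R : realType) (phi : R * R -> R * R) : Prop :=
  bijective phi /\ forall p q : R * R, sqdist (phi p) (phi q) = sqdist p q.

Definition borel2 (R : realType) (Z : set (R * R)) : Prop :=
  <<s [set: R * R], [set U : set (R * R) | open U] >> Z.

Definition bernstein (R : realType) (B : set (R * R)) : Prop :=
  forall Z : set (R * R), borel2 Z -> ~ countable Z ->
    (Z `&` B !=set0) /\ (Z `\` B !=set0).

Definition card2 (T : Type) (C : set T) : Prop :=
  exists a b : T, a <> b /\ C = [set a; b].

Definition two_I_covering (R : realType) (A : set (R * R)) : Prop :=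
  forall C : set (R * R), card2 C ->
    exists phi : R * R -> R * R, plane_isometry phi /\ phi @` C `<=` A.

(* Main.v *)
Require Import Defs.
From HB Require Import structures.
From mathcomp Require Import all_boot all_order all_algebra.
From mathcomp Require Import all_classical all_reals all_analysis.
From mathcomp Require Import lra ring.
Set Implicit Arguments. Unset Strict Implicit. Unset Printing Implicit Defensive.
Import numFieldNormedType.Exports.
Import Order.TTheory GRing.Theory Num.Theory.
Local Open Scope classical_set_scope.
Local Open Scope ring_scope.


Lemma sqdist_cont (R : realType) (p : R * R) : continuous (fun x : R * R => sqdist x p).
Proof.
have h1 : continuous (fun x : R * R => x.1 - p.1).
  move=> x; apply: (@continuousB _ _ _ fst (fun=> p.1)); [exact: cvg_fst | exact: cst_continuous].
have h2 : continuous (fun x : R * R => x.2 - p.2).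
  move=> x; apply: (@continuousB _ _ _ snd (fun=> p.2)); [exact: cvg_snd | exact: cst_continuous].
move=> x; rewrite /sqdist.
exact: (@continuousD _ _ _ (fun x : R * R => (x.1 - p.1) ^+ 2) (fun x : R * R => (x.2 - p.2) ^+ 2) x
   (@continuousM _ _ _ _ x (h1 x) (h1 x)) (@continuousM _ _ _ _ x (h2 x) (h2 x))).
Qed.

Lemma circle_borel (R : realType) (p : R * R) (d2 : R) :
  borel2 [set x | sqdist x p = d2].
Proof.
have [_ hC _] := @smallest_sigma_algebra _ [set: R * R] [set U : set (R * R) | open U].
have -> : [set x | sqdist x p = d2] = [set: R * R] `\` ((fun x => sqdist x p) @^-1` [set y | y != d2]).
  apply/seteqP; split => x /=.
    by move=> ->; split => //; rewrite eqxx.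
  by case=> _ /negP; rewrite negbK => /eqP.
apply: hC; apply: sub_gen_smallest => /=.
apply: open_comp; last exact: open_neq.
move=> x _; exact: sqdist_cont.
Qed.

Lemma borelT (R : realType) : borel2 [set: R * R].
Proof.
have [h0 hC _] := @smallest_sigma_algebra _ [set: R * R] [set U : set (R * R) | open U].
have -> : [set: R * R] = [set: R * R] `\` set0 by rewrite setD0.
exact: hC.
Qed.

Lemma R_uncountable (R : realType) : ~ countable [set: R].
Proof.
move=> cT.
have cB : countable (ball (0:R) 1).
  apply: sub_countable cT; exact: subset_card_le.
have := countable_lebesgue_measure0 cB.
by rewrite lebesgue_measure_ball // => -[] /eqP; rewrite pnatr_eq0.
Qed.

Lemma alg_inj (R : realType) (s t : R) :
  (1 - s^+2) * (1 + t^+2) = (1 - t^+2) * (1 + s^+2) ->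
  s * (1 + t^+2) = t * (1 + s^+2) -> s = t.
Proof.
move=> e1 e2.
have e3 : s^+2 = t^+2.
  have h : (1 - s^+2) * (1 + t^+2) - (1 - t^+2) * (1 + s^+2) = 2*(t^+2 - s^+2) by ring.
  rewrite e1 subrr in h; lra.
have e4 : (s - t) * (1 - s * t) = 0.
  have h : s * (1 + t^+2) - t * (1 + s^+2) = (s - t) * (1 - s * t) by ring.
  by rewrite -h e2 subrr.
move/eqP: e4; rewrite mulf_eq0 => /orP[/eqP|/eqP] h; first by lra.
have e5 : (s - t) * (s + t) = 0.
  have h' : (s - t) * (s + t) = s^+2 - t^+2 by ring.
  by rewrite h' e3 subrr.
move/eqP: e5; rewrite mulf_eq0 => /orP[/eqP|/eqP] h2; first by lra.
have ht : t = - s by lra.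
rewrite ht in h.
have : 0 <= s ^+ 2 := sqr_ge0 s.
have : s * - s = - s^+2 by ring.
lra.
Qed.

Lemma circle_uncountable (R : realType) (p : R * R) (d2 : R) : 0 < d2 ->
  ~ countable [set x | sqdist x p = d2].
Proof.
move=> d2p.
set r := Num.sqrt d2.
have rp : 0 < r by rewrite sqrtr_gt0.
have r2 : r ^+ 2 = d2 by rewrite sqr_sqrtr // ltW.
have den t : 1 + t ^+ 2 != 0 :> R.
  by apply/negP => /eqP h; have : 0 <= t ^+ 2 := sqr_ge0 t; lra.
pose f (t : R) : R * R := (p.1 + r * (1 - t^+2) / (1 + t^+2), p.2 + r * (2 * t) / (1 + t^+2)).
have fin t : sqdist (f t) p = d2.
  rewrite /sqdist /f /= -r2.
  by field; rewrite den.
move/countable_injP => [g ginj]; apply: (@R_uncountable R).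
apply/countable_injP; exists (g \o f) => s t _ _ /= e.
have := ginj _ _ (mem_set (fin s)) (mem_set (fin t)) e.
rewrite /f => -[e1 e2].
have k1 (u : R) : r * (1 - u^+2) / (1 + u^+2) * (1 + u^+2) = r * (1 - u^+2).
  by field; rewrite den.
have k2 (u : R) : r * (2 * u) / (1 + u^+2) * (1 + u^+2) = r * (2 * u).
  by field; rewrite den.
move/addrI: e1 => e1; move/addrI: e2 => e2.
have rn : r != 0 by rewrite gt_eqF.
apply: alg_inj; apply: (mulfI rn).
  have := congr1 (fun z => z * (1 + s^+2) * (1 + t^+2)) e1 => /=.
  rewrite k1 (_ : r * (1 - t ^+ 2) / (1 + t ^+ 2) * (1 + s ^+ 2) * (1 + t ^+ 2)
     = r * (1 - t ^+ 2) / (1 + t ^+ 2) * (1 + t ^+ 2) * (1 + s ^+ 2)); last by ring.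
  rewrite k1 => h.
  by rewrite !mulrA h.
have := congr1 (fun z => z * (1 + s^+2) * (1 + t^+2)) e2 => /=.
rewrite k2 (_ : r * (2 * t) / (1 + t ^+ 2) * (1 + s ^+ 2) * (1 + t ^+ 2)
     = r * (2 * t) / (1 + t ^+ 2) * (1 + t ^+ 2) * (1 + s ^+ 2)); last by ring.
rewrite k2 => h.
have two : (2:R) != 0 by rewrite pnatr_eq0.
apply: (mulfI two).
rewrite (_ : 2 * (r * (s * (1 + t ^+ 2))) = r * (2 * s) * (1 + t ^+ 2)); last by ring.
rewrite h; ring.
Qed.

Lemma sqdist_gt0 (R : realType) (a b : R * R) : a <> b -> 0 < sqdist a b.
Proof.
move=> ab; rewrite lt_neqAle addr_ge0 ?sqr_ge0 // andbT eq_sym.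
apply/negP => /eqP; move/eqP; rewrite paddr_eq0 ?sqr_ge0 // !sqrf_eq0 !subr_eq0.
case/andP => /eqP h1 /eqP h2; apply: ab; case: a b h1 h2 => [a1 a2] [b1 b2] /= -> -> //.
Qed.

Lemma rot_alg (R : realType) (u1 u2 v1 v2 : R) : u1^+2 + u2^+2 != 0 ->
  let c := (u1 * v1 + u2 * v2) / (u1^+2 + u2^+2) in
  let s := (u1 * v2 - u2 * v1) / (u1^+2 + u2^+2) in
  [/\ c * u1 - s * u2 = v1, s * u1 + c * u2 = v2 &
     (v1^+2 + v2^+2 = u1^+2 + u2^+2 -> c^+2 + s^+2 = 1)].
Proof.
move=> D c s; split.
- by rewrite /c /s; field.
- by rewrite /c /s; field.
move=> hv.
have -> : c^+2 + s^+2 = (u1^+2 + u2^+2) * (v1^+2 + v2^+2) / (u1^+2 + u2^+2)^+2.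
  by rewrite /c /s; field.
by rewrite hv; field.
Qed.

Lemma exists_iso (R : realType) (a b p q : R * R) : a <> b ->
  sqdist p q = sqdist a b ->
  exists phi, plane_isometry phi /\ phi a = p /\ phi b = q.
Proof.
move=> ab hpq.
have D0 : (b.1 - a.1)^+2 + (b.2 - a.2)^+2 != 0.
  have := sqdist_gt0 ab; rewrite /sqdist.
  have -> : (a.1 - b.1)^+2 + (a.2 - b.2)^+2 = (b.1 - a.1)^+2 + (b.2 - a.2)^+2 by ring.
  by move=> h; rewrite gt_eqF.
have [h1 h2 h3] := rot_alg (q.1 - p.1) (q.2 - p.2) D0.
move: h1 h2 h3.
set c := ((b.1 - a.1) * (q.1 - p.1) + _) / _.
set s := (_ - _) / _ => h1 h2 h3.
have cs : c^+2 + s^+2 = 1.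
  apply: h3.
  rewrite (_ : (q.1 - p.1)^+2 + (q.2 - p.2)^+2 = sqdist p q); last by rewrite /sqdist; ring.
  by rewrite hpq /sqdist; ring.
clearbody c s; clear h3.
pose phi (x : R * R) : R * R := (p.1 + c * (x.1 - a.1) - s * (x.2 - a.2), p.2 + s * (x.1 - a.1) + c * (x.2 - a.2)).
pose psi (y : R * R) : R * R := (a.1 + c * (y.1 - p.1) + s * (y.2 - p.2), a.2 - s * (y.1 - p.1) + c * (y.2 - p.2)).
exists phi; split; [split|split].
- exists psi.
    move=> [x1 x2]; rewrite /phi /psi /=; congr (_, _).
      have -> : a.1 + c * (p.1 + c * (x1 - a.1) - s * (x2 - a.2) - p.1) + s * (p.2 + s * (x1 - a.1) + c * (x2 - a.2) - p.2) = a.1 + (c^+2 + s^+2) * (x1 - a.1) by ring.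
      by rewrite cs; ring.
    have -> : a.2 - s * (p.1 + c * (x1 - a.1) - s * (x2 - a.2) - p.1) + c * (p.2 + s * (x1 - a.1) + c * (x2 - a.2) - p.2) = a.2 + (c^+2 + s^+2) * (x2 - a.2) by ring.
    by rewrite cs; ring.
  move=> [y1 y2]; rewrite /phi /psi /=; congr (_, _).
    have -> : p.1 + c * (a.1 + c * (y1 - p.1) + s * (y2 - p.2) - a.1) - s * (a.2 - s * (y1 - p.1) + c * (y2 - p.2) - a.2) = p.1 + (c^+2 + s^+2) * (y1 - p.1) by ring.
    by rewrite cs; ring.
  have -> : p.2 + s * (a.1 + c * (y1 - p.1) + s * (y2 - p.2) - a.1) + c * (a.2 - s * (y1 - p.1) + c * (y2 - p.2) - a.2) = p.2 + (c^+2 + s^+2) * (y2 - p.2) by ring.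
  by rewrite cs; ring.
- move=> [x1 x2] [y1 y2]; rewrite /sqdist /phi /=.
  have -> : (p.1 + c * (x1 - a.1) - s * (x2 - a.2) - (p.1 + c * (y1 - a.1) - s * (y2 - a.2))) ^+ 2 +
    (p.2 + s * (x1 - a.1) + c * (x2 - a.2) - (p.2 + s * (y1 - a.1) + c * (y2 - a.2))) ^+ 2
    = (c^+2 + s^+2) * ((x1 - y1) ^+ 2 + (x2 - y2) ^+ 2) by ring.
  by rewrite cs mul1r.
- by rewrite /phi !subrr !mulr0 subr0 !addr0; case: p {hpq h1 h2 phi psi}.
- rewrite /phi; move: h1 h2; case: q {hpq phi psi} => q1 q2 /= h1 h2.
  congr (_, _).
    by rewrite -addrA -[_ - s * _]/(c * _ - s * _) h1 addrC subrK.
  by rewrite -addrA h2 addrC subrK.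
Qed.

Theorem mainTheorem16 (R : realType) (B : set (R * R)) :
  bernstein B -> two_I_covering B.
Proof.
move=> hB C [a [b [ab ->]]].
have [[p [_ Bp]] _] := hB _ (circle_borel (0, 0) 1) (@circle_uncountable R (0, 0) 1 ltr01).
have d0 := sqdist_gt0 ab.
have [[q [hq Bq]] _] := hB _ (circle_borel p (sqdist a b)) (@circle_uncountable R p _ d0).
have hpq : sqdist p q = sqdist a b.
  by rewrite -hq /sqdist; ring.
have [phi [iso [pa pb]]] := exists_iso ab hpq.
exists phi; split => //.
by move=> _ [x [->|->] <-]; rewrite ?pa ?pb.
Qed.
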